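(* Let $r\ge1$ be an integer, $d=2r-1$, $\beta>0$, and let $Q$ be a complex polynomial of degree $r$ with $Q(0)=0$. Define $a_i,b_i$ ($0\le i\le d$) by $1-2Q'(x)=\sum_{i=0}^d a_ix^i$ and $x\big(Q'(x)^2-Q'(x)-Q''(x)\big)=\sum_{i=0}^d b_ix^i$, and for $0\le i\le\min(n,d)$ put $\gamma_{ni}=\big(a_i(n-i+\frac\beta2)+b_i\big)\sqrt{\frac{n!(\beta)_n}{(n-i)!(\beta)_{n-i}}}$. Let $P_0=1$, $P_n=0$ for $n<0$, and $$\Big(x+\frac{\beta}{2}\Big)P_n(x)=\sqrt{(n+1)(n+\beta)}\,P_{n+1}(x)+\sum_{i=0}^{\min(n,d)}\gamma_{ni}P_{n-i}(x),\qquad n\ge0,$$ and set $\widehat P_n(x)=\sqrt{n!(\beta)_n}\,P_n(x)$. Then $$\sum_{n=0}^\infty\frac{\widehat P_n(x)}{n!(\beta)_n}z^n=e^{Q(z)}\,{}_1F_1\left(\begin{matrix}-x\\ \beta\end{matrix};-z\right).$$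
   Context: $(a)_n=a(a+1)\cdots(a+n-1)$, $(a)_0=1$; ${}_1F_1\left(\begin{matrix}a\\ b\end{matrix};x\right)=\sum_{m\ge0}\frac{(a)_m}{(b)_m}\frac{x^m}{m!}$. *)

(* Defs.v *)
(* Complex numbers: an arbitrary numClosedFieldType C
   (e.g. complex R for R : realType). *)
From HB Require Import structures.
From mathcomp Require Import all_boot all_order all_algebra.
Set Implicit Arguments.
Unset Strict Implicit.
Unset Printing Implicit Defensive.
Import Order.TTheory GRing.Theory Num.Theory.
Local Open Scope ring_scope.

Section Defs.
Variable C : numClosedFieldType.

Definition poch (a : C) (n : nat) : C := \prod_(i < n) (a + i%:R).

Definition acoef (Q : {poly C}) (i : nat) : C := (1 - 2%:R *: Q^`())`_i.

Definition bcoef (Q : {poly C}) (i : nat) : C :=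
  ('X * (Q^`() ^+ 2 - Q^`() - Q^`(2)))`_i.

Definition gamma (Q : {poly C}) (beta : C) (n i : nat) : C :=
  (acoef Q i * ((n - i)%:R + beta / 2%:R) + bcoef Q i)
  * sqrtC (n`!%:R * poch beta n / ((n - i)`!%:R * poch beta (n - i))).

End Defs.

Section Defs2.
Variable C : numClosedFieldType.

(* k-th Taylor coefficient of the formal power series e^{Q(z)}, for Q(0)=0:
   [z^k] sum_m Q(z)^m / m!  (only m <= k contribute since Q(0) = 0) *)
Definition expQ_coef (Q : {poly C}) (k : nat) : C :=
  \sum_(m < k.+1) (Q ^+ m)`_k / (m`!)%:R.

Definition F11_coef (x beta : C) (m : nat) : C :=
  poch (- x) m / poch beta m * (- 1) ^+ m / (m`!)%:R.

End Defs2.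

(* Main.v *)
Require Import Defs.
From HB Require Import structures.
From mathcomp Require Import all_boot all_order all_algebra.
From mathcomp Require Import ring zify.
Set Implicit Arguments. Unset Strict Implicit. Unset Printing Implicit Defensive.
Import Order.TTheory GRing.Theory Num.Theory.
Local Open Scope ring_scope.

Section Low.
Variable C : numClosedFieldType.
Definition low (K : nat) (p : {poly C}) := forall k, (k < K)%N -> p`_k = 0.

Lemma lowMl K p q : low K p -> low K (q * p).
Proof.
move=> hp k hk; rewrite coefM big1 // => j _; rewrite hp ?mulr0 //.
exact: leq_ltn_trans (leq_subr _ _) hk.
Qed.
Lemma lowMr K p q : low K p -> low K (p * q).
Proof. by move=> hp; rewrite mulrC; apply: lowMl. Qed.
Lemma lowD K p q : low K p -> low K q -> low K (p + q).
Proof. by move=> hp hq k hk; rewrite coefD hp ?hq ?addr0. Qed.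
Lemma lowN K p : low K p -> low K (- p).
Proof. by move=> hp k hk; rewrite coefN hp ?oppr0. Qed.
Lemma low_deriv K p : low K.+1 p -> low K p^`().
Proof. by move=> hp k hk; rewrite coef_deriv hp ?mul0rn. Qed.
Lemma lowW K K' p : (K' <= K)%N -> low K p -> low K' p.
Proof. by move=> hK hp k hk; apply: hp; exact: leq_trans hk hK. Qed.
Lemma lowX K p : low K p -> low K.+1 ('X * p).
Proof. by move=> hp [|k] hk; rewrite coefXM //= hp. Qed.
End Low.

Section EQ.
Variable C : numClosedFieldType.
Variable Q : {poly C}.
Hypothesis Q0 : Q`_0 = 0.

Lemma Qpow_low m : low m (Q ^+ m).
Proof.
have : root Q 0 by rewrite /root horner_coef0 Q0.
move/factor_theorem=> [q ->]; rewrite subr0 exprMn => k hk.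
by rewrite coefMXn hk.
Qed.

Definition Sexp M : {poly C} := \sum_(m < M) ((m`!)%:R^-1 : C) *: Q ^+ m.

Lemma Sexp_coef M k : (k < M)%N -> (Sexp M)`_k = expQ_coef Q k.
Proof.
move=> hk; rewrite /Sexp /expQ_coef coef_sum (big_ord_widen M (fun m => (Q ^+ m)`_k / (m`!)%:R) hk).
rewrite [RHS]big_mkcond /=; apply: eq_bigr => m _; rewrite coefZ.
case: ifP => hm; first by rewrite mulrC.
by rewrite Qpow_low ?mulr0 // ltnNge -ltnS hm.
Qed.

Lemma Sexp_deriv M : (Sexp M.+1)^`() = Q^`() * Sexp M.
Proof.
rewrite /Sexp raddf_sum /= big_ord_recl /= derivZ expr0 derivC scaler0 add0r.
rewrite mulr_sumr; apply: eq_bigr => m _.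
rewrite derivZ deriv_exp /= /bump /= add1n add0n -scalerMnr scalerMnl scalerAr.
congr (_ * (_ *: _)).
by rewrite factS natrM invfM -mulrnAl -mulr_natr mulVf ?mul1r // pnatr_eq0.
Qed.
End EQ.

Section F.
Variable C : numClosedFieldType.
Variables beta x : C.
Hypothesis hb : 0 < beta.

Lemma bm_gt0 m : 0 < beta + m%:R.
Proof. by apply: ltr_wpDr; rewrite ?ler0n. Qed.

Lemma poch_gt0 m : 0 < poch beta m.
Proof. by apply: prodr_gt0 => i _; apply: bm_gt0. Qed.

Lemma pochS (a : C) m : poch a m.+1 = poch a m * (a + m%:R).
Proof. by rewrite /poch big_ord_recr. Qed.

Lemma F_rec m : (m.+1)%:R * (m%:R + beta) * F11_coef x beta m.+1
   = (x - m%:R) * F11_coef x beta m.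
Proof.
rewrite /F11_coef !pochS factS natrM exprS.
have h1 : poch beta m != 0 by rewrite lt0r_neq0 // poch_gt0.
have h2 : beta + m%:R != 0 by rewrite lt0r_neq0 // bm_gt0.
have h3 : (m.+1)%:R != 0 :> C by rewrite pnatr_eq0.
have h4 : (m`!)%:R != 0 :> C by rewrite pnatr_eq0 -lt0n fact_gt0.
have h5 : 1 + m%:R != 0 :> C by rewrite addrC natr1.
by field; rewrite h1 h2 h5 h4.
Qed.

Lemma coefXD (p : {poly C}) k : ('X * p^`())`_k = p`_k *+ k.
Proof. by case: k => [|k]; rewrite coefXM ?mulr0n //= coef_deriv. Qed.

Definition Fp M : {poly C} := \poly_(m < M) F11_coef x beta m.

Lemma Fp_ode K : let F := Fp K.+1 in
  low K ('X * F^`()^`() + beta%:P * F^`() + 'X * F^`() - x%:P * F).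
Proof.
move=> F k hk; rewrite !coefB !coefD coefXD coefXD !coefCM !coef_deriv /F !coef_poly.
rewrite !ltnS hk (ltnW hk).
have e := F_rec k; move: e.
set a := F11_coef x beta k.+1; set b := F11_coef x beta k => e.
have -> : a *+ k.+1 *+ k + beta * (a *+ k.+1) + b *+ k - x * b
   = k.+1%:R * (k%:R + beta) * a - (x - k%:R) * b by ring.
by rewrite e subrr.
Qed.
End F.

Section G.
Variable C : numClosedFieldType.
Variables (beta x : C) (Q : {poly C}).
Hypothesis hb : 0 < beta.
Hypothesis Q0 : Q`_0 = 0.

Definition Apol : {poly C} := 1 - 2%:R *: Q^`().
Definition Bpol : {poly C} := 'X * (Q^`() ^+ 2 - Q^`() - Q^`(2)).
Definition gseq k := \sum_(j < k.+1) expQ_coef Q j * F11_coef x beta (k - j).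

Lemma G_rec n : (x + beta / 2%:R) * gseq n =
  n.+1%:R * (n%:R + beta) * gseq n.+1 +
  \sum_(i < n.+1) (Apol`_i * ((n - i)%:R + beta / 2%:R) + Bpol`_i) * gseq (n - i).
Proof.
set M := n.+1.
set S := Sexp Q M.+1.
set F := Fp beta x M.+1.
set G : {poly C} := S * F.
have hG k : (k < M.+1)%N -> G`_k = gseq k.
  move=> hk; rewrite /G coefM /gseq; apply: eq_bigr => j _.
  have hj : (j < M.+1)%N := leq_ltn_trans (ltn_ord j : (j <= k)%N) hk.
  rewrite /S Sexp_coef // /F /Fp coef_poly ifT //.
  exact: leq_ltn_trans (leq_subr _ _) hk.
set Q1 := Q^`(). set F1 := F^`(). set F2 := F1^`().
set E1 : {poly C} := S^`() - Q1 * S.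
set E2 : {poly C} := 'X * F2 + beta%:P * F1 + 'X * F1 - x%:P * F.
have lE1 : low M E1.
  have SS : Sexp Q M.+1 = Sexp Q M + (M`!%:R^-1)%:P * Q ^+ M.
    by rewrite /Sexp big_ord_recr /= mul_polyC.
  rewrite /E1 /S Sexp_deriv // SS /Q1.
  have -> : Q^`() * Sexp Q M - Q^`() * (Sexp Q M + (M`!%:R^-1)%:P * Q ^+ M)
     = - (Q^`() * ((M`!%:R^-1)%:P * Q ^+ M)) by ring.
  by apply/lowN/lowMl/lowMl/Qpow_low.
have lE2 : low M E2 by apply: Fp_ode.
set L : {poly C} := 'X * G^`()^`() + beta%:P * G^`() + Apol * ('X * G^`())
   + (beta / 2%:R)%:P * (Apol * G) + Bpol * G - (x + beta / 2%:R)%:P * G.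
have eL : L = S * E2 + E1 * ('X * Q1 * F + 2%:R%:P * 'X * F1 + beta%:P * F + 'X * Apol * F)
   + 'X * (F * E1^`()).
  rewrite /L /E1 /E2 /G /Apol /Bpol /F2 /F1 derivnS derivn1 -/Q1 -mul_polyC.
  rewrite !derivE.
  set h := beta / 2%:R.
  have -> : beta = h + h by rewrite /h; field.
  rewrite !polyCD; ring.
have lL : low M L.
  rewrite eL; apply: lowD; first apply: lowD.
  - exact: lowMl.
  - exact: lowMr.
  - by apply/lowX/lowMl/low_deriv.
have := lL n (ltnSn n).
have hG' (i : 'I_M) : G`_(n - i) = gseq (n - i).
  by apply: hG; rewrite ltnS (leq_trans (leq_subr _ _)).
rewrite /L !coefB !coefD coefXD !coefCM !coef_deriv (hG n.+1 (ltnSn _)) (hG n (leqW (ltnSn _))) (coefM Apol) (coefM Apol) (coefM Bpol).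
under eq_bigr do rewrite coefXD hG'.
have hs (c : nat -> C) : \sum_(j < M) c j * G`_(n - j) = \sum_(j < M) c j * gseq (n - j).
  by apply: eq_bigr => j _; rewrite hG'.
rewrite !hs.

move/eqP; rewrite subr_eq0 => /eqP <-.
have sumE : \sum_(i<M) (Apol`_i * ((n - i)%:R + beta/2%:R) + Bpol`_i) * gseq (n - i)
  = \sum_(i<M) Apol`_i * (gseq (n-i) *+ (n-i)) + beta/2%:R * \sum_(i<M) Apol`_i * gseq (n-i)
    + \sum_(i<M) Bpol`_i * gseq (n-i).
  by rewrite mulr_sumr -!big_split; apply: eq_bigr => i _ /=; ring.
rewrite sumE /M; ring.
Qed.
End G.

Lemma sum_restrict (C : numClosedFieldType) (F : nat -> C) n d :
  (forall i, (d < i)%N -> F i = 0) ->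
  \sum_(i < (minn n d).+1) F i = \sum_(i < n.+1) F i.
Proof.
move=> hF; rewrite (big_ord_widen n.+1 F); last by rewrite ltnS geq_minl.
rewrite big_mkcond; apply: eq_bigr => i _.
case: ifP => // /negbT hi; rewrite hF //.
have hin := ltn_ord i; move: hi hin; rewrite -leqNgt; lia.
Qed.

Lemma Q1_zero (C : numClosedFieldType) (Q : {poly C}) r j :
  size Q = r.+1 -> (r <= j)%N -> (Q^`())`_j = 0.
Proof. by move=> hs hj; rewrite coef_deriv nth_default ?mul0rn // hs ltnS. Qed.

Lemma Q2_zero (C : numClosedFieldType) (Q : {poly C}) r j :
  size Q = r.+1 -> (r <= j)%N -> (Q^`(2))`_j = 0.
Proof.
move=> hs hj; rewrite derivnS derivn1 coef_deriv (Q1_zero hs) ?mul0rn //.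
exact: leqW.
Qed.

Lemma Apol_zero (C : numClosedFieldType) (Q : {poly C}) r i :
  (1 <= r)%N -> size Q = r.+1 -> (2 * r - 1 < i)%N -> (Apol Q)`_i = 0.
Proof.
move=> hr hs hi; rewrite /Apol coefB coef1 coefZ (Q1_zero hs); last by lia.
have -> : (i == 0%N) = false by apply/eqP; lia.
by rewrite mulr0 subr0.
Qed.

Lemma Bpol_zero (C : numClosedFieldType) (Q : {poly C}) r i :
  (1 <= r)%N -> size Q = r.+1 -> (2 * r - 1 < i)%N -> (Bpol Q)`_i = 0.
Proof.
move=> hr hs hi; rewrite /Bpol coefXM.
case: i hi => [|i] hi //=.
rewrite !coefB (Q1_zero hs) ?(Q2_zero hs); try lia.
rewrite expr2 nth_default ?subr0 //.
apply: leq_trans (size_polyMleq _ _) _.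
have hQ1 : (size Q^`() <= r)%N.
  by apply/leq_sizeP => j hj; apply: (Q1_zero hs).
apply: (@leq_trans (r + r).-1); first by rewrite -!subn1 leq_sub2r // leq_add.
rewrite -subn1; lia.
Qed.


Theorem mainTheorem3 (C : numClosedFieldType) (r : nat) (beta x : C)
  (Q : {poly C}) (P : nat -> C) :
  (1 <= r)%N ->
  0 < beta ->
  size Q = r.+1 ->
  Q`_0 = 0 ->
  P 0%N = 1 ->
  (forall n : nat,
     (x + beta / 2%:R) * P n =
       sqrtC (n.+1%:R * (n%:R + beta)) * P n.+1
       + \sum_(i < (minn n (2 * r - 1)).+1) gamma Q beta n i * P (n - i)%N) ->
  forall n : nat,
    sqrtC ((n`!)%:R * poch beta n) * P n / ((n`!)%:R * poch beta n) =
      \sum_(k < n.+1) expQ_coef Q k * F11_coef x beta (n - k).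
Proof.
move=> hr hb hs Q0 P0 hrec.
set d := (2 * r - 1)%N.
pose c n : C := (n`!)%:R * poch beta n.
have c_gt0 n : 0 < c n by rewrite mulr_gt0 ?ltr0n ?fact_gt0 ?poch_gt0.
have c_neq0 n : c n != 0 by rewrite lt0r_neq0.
pose s n := sqrtC (c n).
have s_gt0 n : 0 < s n by rewrite sqrtC_gt0.
have s_neq0 n : s n != 0 by rewrite lt0r_neq0.
pose h n := s n * P n / c n.
have Ph n : P n = h n * s n.
  have e' : s n * s n = c n by rewrite -expr2 sqrtCK.
  rewrite /h [s n * P n]mulrC -!mulrA [_^-1 * s n]mulrC [s n * (s n * _)]mulrA e'.
  by rewrite mulfV ?mulr1.
pose co n i := (Apol Q)`_i * ((n - i)%:R + beta / 2%:R) + (Bpol Q)`_i.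
pose t n : C := n.+1%:R * (n%:R + beta).
have t_gt0 n : 0 < t n.
  by rewrite mulr_gt0 ?ltr0n // addrC bm_gt0.
have key1 n : sqrtC (t n) * s n.+1 = t n * s n.
  rewrite /s; have -> : c n.+1 = c n * t n.
    by rewrite /c /t factS natrM pochS; ring.
  rewrite sqrtCM ?nnegrE ?ltW // mulrCA -expr2 sqrtCK mulrC.
  by rewrite mulrC.
have key2 n i : sqrtC (c n / c (n - i)%N) * s (n - i)%N = s n.
  by rewrite /s -sqrtCM ?nnegrE ?divr_ge0 ?ltW // divfK.
have hrecH n : (x + beta / 2%:R) * h n = t n * h n.+1
     + \sum_(i < (minn n d).+1) co n i * h (n - i)%N.
  apply: (mulIf (s_neq0 n)).
  have e := hrec n; rewrite (Ph n) (Ph n.+1) in e.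
  rewrite -mulrA e mulrDl.
  rewrite mulrA (mulrC _ (h n.+1)) -mulrA key1 mulr_suml.
  congr (_ + _); first by rewrite /t; ring.
  apply: eq_bigr => i _.
  rewrite Ph /gamma -/(c n) -/(c (n - i)%N) -(key2 n i) /co /acoef /bcoef /Apol /Bpol.
  ring.
have gR n : (x + beta / 2%:R) * gseq beta x Q n = t n * gseq beta x Q n.+1
     + \sum_(i < (minn n d).+1) co n i * gseq beta x Q (n - i)%N.
  rewrite G_rec // (@sum_restrict _ (fun i => co n i * gseq beta x Q (n - i)%N) n d) => [//|i hi].
  by rewrite /co (Apol_zero hr hs hi) (Bpol_zero hr hs hi) mul0r add0r mul0r.
have t_neq0 n : t n != 0 by rewrite lt0r_neq0.
have main : forall n k, (k <= n)%N -> h k = gseq beta x Q k.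
  elim=> [|n IH] k hk.
    move: hk; rewrite leqn0 => /eqP ->.
    rewrite /h /s /c /gseq /expQ_coef /F11_coef /poch !big_ord1 !big_ord0 P0 /=.
    by rewrite expr0 coef1 subnn fact0 expr0 /= !(mulr1, divr1, sqrtC1).
  case: (ltnP k n.+1) => hkn; first exact: IH.
  have -> : k = n.+1 by lia.
  apply: (mulfI (t_neq0 n)).
  have -> : t n * h n.+1 = (x + beta / 2%:R) * h n - \sum_(i < (minn n d).+1) co n i * h (n - i)%N.
    by rewrite hrecH addrK.
  have -> : t n * gseq beta x Q n.+1 = (x + beta / 2%:R) * gseq beta x Q n
     - \sum_(i < (minn n d).+1) co n i * gseq beta x Q (n - i)%N.
    by rewrite gR addrK.
  rewrite IH //; congr (_ - _); apply: eq_bigr => i _; rewrite IH //.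
  exact: leq_subr.
intro m. exact (main m m (leqnn m)).
Qed.
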